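(* Let $q$ be a prime power. The number of triples $(\lambda_0,\lambda_1,\lambda_2)\in\mathbb{F}_q^3$ for which the polynomial $p(x)=x^3-\lambda_2x^2-\lambda_1x-\lambda_0$ is irreducible over $\mathbb{F}_q$ and the polynomial $r(x)=x^3+\lambda_2x^2-(\lambda_1-1)x+\lambda_0$ is reducible over $\mathbb{F}_q$ is at least $\frac{q(q-1)^2}{9}-\frac{2(q-1)}{3}$. *)

(* Defs.v *)
From mathcomp Require Import all_boot all_order all_algebra all_field.
Set Implicit Arguments. Unset Strict Implicit. Unset Printing Implicit Defensive.
Import GRing.Theory.
Local Open Scope ring_scope.

Definition pL (F : finFieldType) (l0 l1 l2 : F) : {poly F} :=
  'X^3 - l2%:P * 'X^2 - l1%:P * 'X - l0%:P.

Definition rL (F : finFieldType) (l0 l1 l2 : F) : {poly F} :=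
  'X^3 + l2%:P * 'X^2 - (l1 - 1)%:P * 'X + l0%:P.

(* Main.v *)
Require Import Defs.
From mathcomp Require Import all_boot all_order all_algebra all_field.
From mathcomp Require Import ring lra zify.
Set Implicit Arguments. Unset Strict Implicit.
Import GRing.Theory Num.Theory.
Local Open Scope ring_scope.

Definition Pv (F : finFieldType) (l : F * F * F) (s : F) : F :=
  s ^+ 3 - l.2 * s ^+ 2 - l.1.2 * s - l.1.1.

Lemma cubic_size (F : fieldType) (a b c : F) :
  size ('X^3 + a%:P * 'X^2 + b%:P * 'X + c%:P : {poly F}) = 4%N.
Proof.
rewrite -!addrA size_addl ?size_polyXn //.
apply: (leq_ltn_trans (size_add _ _)); rewrite gtn_max; apply/andP; split.
  by rewrite mul_polyC (leq_ltn_trans (size_scale_leq _ _)) // size_polyXn.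
apply: (leq_ltn_trans (size_add _ _)); rewrite gtn_max; apply/andP; split.
  by rewrite mul_polyC (leq_ltn_trans (size_scale_leq _ _)) // size_polyX.
exact: (leq_ltn_trans (size_polyC_leq1 _)).
Qed.

Lemma pL_eq (F : finFieldType) (l0 l1 l2 : F) :
  pL l0 l1 l2 = 'X^3 + (-l2)%:P * 'X^2 + (-l1)%:P * 'X + (-l0)%:P.
Proof. by rewrite /pL !polyCN !mulNr. Qed.

Lemma pLX_eq (F : finFieldType) (l0 l1 l2 : F) :
  pL l0 l1 l2 + 'X = 'X^3 + (-l2)%:P * 'X^2 + (1 - l1)%:P * 'X + (-l0)%:P.
Proof. rewrite /pL polyCB polyC1 !polyCN; ring. Qed.

Lemma rL_eq (F : finFieldType) (l0 l1 l2 : F) :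
  rL l0 l1 l2 = 'X^3 + l2%:P * 'X^2 + (-(l1 - 1))%:P * 'X + l0%:P.
Proof. by rewrite /rL polyCN mulNr. Qed.

Lemma hornerpL (F : finFieldType) (l : F * F * F) s :
  (pL l.1.1 l.1.2 l.2).[s] = Pv l s.
Proof. by case: l => [[l0 l1] l2]; rewrite /pL /Pv !hornerE. Qed.

Lemma card_roots3 (F : finFieldType) (p : {poly F}) (A : {set F}) :
  size p = 4%N -> (forall s, s \in A -> root p s) -> (#|A| <= 3)%N.
Proof.
move=> sp rA.
have p0 : p != 0 by rewrite -size_poly_eq0 sp.
have := @max_poly_roots _ p (enum A) p0.
rewrite enum_uniq -cardE sp; move=> H; apply: H => //.
by apply/allP => s; rewrite mem_enum; exact: rA.
Qed.

Lemma irr_pL (F : finFieldType) (l : F * F * F) :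
  (forall s, Pv l s != 0) -> irreducible_poly (pL l.1.1 l.1.2 l.2).
Proof.
move=> H; apply: cubic_irreducible; first by rewrite pL_eq cubic_size.
by move=> x; rewrite /root hornerpL.
Qed.

Lemma red_rL (F : finFieldType) (l : F * F * F) t :
  Pv l t = - t -> ~ irreducible_poly (rL l.1.1 l.1.2 l.2).
Proof.
case: l => [[l0 l1] l2] /= Ht [_ Hirr].
have rt : root (rL l0 l1 l2) (- t).
  apply/eqP; rewrite /rL !hornerE /=.
  match goal with |- ?a = _ => have -> : a = - (Pv ((l0, l1), l2) t + t) end.
    by rewrite /Pv /=; ring.
  by rewrite Ht addNr oppr0.
have dv : ('X - (- t)%:P) %| rL l0 l1 l2 by rewrite dvdp_XsubCl.
have := Hirr _ _ dv; rewrite size_XsubC => /(_ isT) /eqp_size.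
by rewrite size_XsubC rL_eq cubic_size.
Qed.

Lemma M_le3 (F : finFieldType) (l : F * F * F) :
  (#|[set t | Pv l t == - t]| <= 3)%N.
Proof.
apply: (@card_roots3 _ (pL l.1.1 l.1.2 l.2 + 'X)); first by rewrite pLX_eq cubic_size.
move=> s; rewrite inE /root hornerD hornerpL hornerX => /eqP ->.
by rewrite addNr.
Qed.

Definition Lt (F : finFieldType) (t : F) (x : F * F) : F * F * F :=
  ((t ^+ 3 - x.2 * t ^+ 2 - x.1 * t + t, x.1), x.2).

Lemma Lt_inj (F : finFieldType) (t : F) : injective (Lt t).
Proof. by move=> [a b] [c d] [_ -> ->]. Qed.

Lemma Pv_Lt_t (F : finFieldType) (t : F) x : Pv (Lt t x) t = - t.
Proof. rewrite /Pv /Lt /=; ring. Qed.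

Definition hh (F : finFieldType) (t s : F) := s ^+ 2 + s * t + t ^+ 2 - t / (s - t).

Lemma Pv_Lt (F : finFieldType) (t s : F) x : s != t ->
  Pv (Lt t x) s = (s - t) * (hh t s - x.2 * (s + t) - x.1).
Proof.
move=> st; have st0 : s - t != 0 by rewrite subr_eq0.
rewrite /Pv /Lt /hh /=; field; exact: st0.
Qed.

Lemma E_iff (F : finFieldType) (t s : F) x : s != t ->
  (Pv (Lt t x) s == 0) = (x.1 == hh t s - x.2 * (s + t)).
Proof.
move=> st; rewrite Pv_Lt // mulf_eq0 subr_eq0 (negbTE st) /= subr_eq0 eq_sym.
done.
Qed.

Lemma cardS_sum (T : finType) (p : pred T) :
  #|[set s | p s]| = (\sum_s (p s : nat))%N.
Proof.
rewrite -sum1_card big_mkcond /=; apply: eq_bigr => s _.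
by rewrite inE; case: (p s).
Qed.

Lemma count_t (F : finFieldType) (t : F) : t != 0 ->
  (#|F| * #|F| + 2 <= 3 * #|[set x : F * F | [forall s, Pv (Lt t x) s != 0%R]]|)%N.
Proof.
move=> t0; set q := #|F|.
pose a x s := (s != t) && (Pv (Lt t x) s == 0).
pose N x := (\sum_s (a x s : nat))%N.
have N3 x : (N x <= 3)%N.
  rewrite /N -cardS_sum.
  apply: (@card_roots3 _ (pL (Lt t x).1.1 (Lt t x).1.2 (Lt t x).2)).
    by rewrite pL_eq cubic_size.
  by move=> s; rewrite inE /root hornerpL => /andP[_ ->].
have Gdef : #|[set x | [forall s, Pv (Lt t x) s != 0]]|
    = (\sum_x ((N x == 0%N) : nat))%N.
  rewrite -cardS_sum; apply: eq_card => x; rewrite !inE /N sum_nat_eq0.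
  apply/forallP/forallP => H s.
    have [->|st] := eqVneq s t; first by rewrite /a eqxx.
    by rewrite /a st /= (negbTE (H s)).
  have [->|st] := eqVneq s t; first by rewrite Pv_Lt_t oppr_eq0.
  by have := H s; rewrite /a st /=; case: (Pv _ _ == 0).
have q2 : (1 < q)%N.
  have := subset_leq_card (subsetT [set (0:F); 1]).
  by rewrite cards2 eq_sym oner_neq0 cardsT.
have P1 : (3 * (q * q) + \sum_x N x * N x
          <= 3 * \sum_x ((N x == 0%N) : nat) + 4 * \sum_x N x)%N.
  have -> : (3 * (q * q) = \sum_(x : F * F) 3)%N.
    by rewrite sum_nat_const cardT -cardE card_prod mulnC.
  rewrite !big_distrr /= -!big_split /=; apply: leq_sum => x _.
  by have := N3 x; case: (N x) => [|[|[|[|n]]]].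
have P2 : (\sum_x N x <= q.-1 * q)%N.
  rewrite /N exchange_big /=.
  apply: (@leq_trans (\sum_s ((s != t) : nat) * q)%N).
    apply: leq_sum => s _; have [->|st] := eqVneq s t.
      by rewrite big1 // => x _; rewrite /a eqxx.
    rewrite mul1n -cardS_sum.
    apply: (@leq_trans #|(fun l2 => (hh t s - l2 * (s + t), l2)) @: [set: F]|);
      last by rewrite (leq_trans (leq_imset_card _ _)) // cardsT.
    apply: subset_leq_card; apply/subsetP => x; rewrite inE /a st /= E_iff //.
    move=> /eqP Hx; apply/imsetP; exists x.2; first by rewrite inE.
    by case: x Hx => /= ? ? ->.
  rewrite -big_distrl /= -cardS_sum.
  have -> : [set s | s != t] = [set~ t] by apply/setP => s; rewrite !inE.
  by rewrite cardsC1.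
have P3 : (q.-1 * q.-2 + \sum_x N x <= \sum_x N x * N x)%N.
  have -> : (\sum_x N x * N x
      = \sum_s1 \sum_s2 \sum_x ((a x s1 : nat) * (a x s2 : nat)))%N.
    rewrite /N.
    under eq_bigr => x _ do rewrite big_distrl /=.
    under eq_bigr => x _ do under eq_bigr => s1 _ do rewrite big_distrr /=.
    rewrite exchange_big; apply: eq_bigr => s1 _; rewrite exchange_big //.
  have pw s1 s2 : ((((s1 != t) && (s2 != t) && (s1 != s2)) : nat)
       + (s1 == s2) * \sum_x (a x s1 : nat)
       <= \sum_x ((a x s1 : nat) * (a x s2 : nat)))%N.
    have [<-|ne] := eqVneq s1 s2.
      rewrite andbF add0n mul1n; apply: leq_sum => x _; by case: (a x s1).
    rewrite andbT mul0n addn0.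
    case: (boolP ((s1 != t) && (s2 != t))) => // /andP[s1t s2t].
    pose l2 := (hh t s1 - hh t s2) / (s1 - s2).
    pose l1 := hh t s1 - l2 * (s1 + t).
    have e2 : (l1 == hh t s2 - l2 * (s2 + t)) = true.
      apply/eqP; rewrite /l1 /l2; field; by rewrite subr_eq0.
    rewrite (bigD1 (l1, l2)) //= /a s1t s2t !E_iff //= e2 /l1 eqxx.
    by [].
  have Hs : (\sum_s1 \sum_s2 ((((s1 != t) && (s2 != t) && (s1 != s2)) : nat)
       + (s1 == s2) * \sum_x (a x s1 : nat)) <=
       \sum_s1 \sum_s2 \sum_x ((a x s1 : nat) * (a x s2 : nat)))%N.
    by apply: leq_sum => s1 _; apply: leq_sum => s2 _; exact: pw.
  apply: (fun h => leq_trans h Hs).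
  rewrite (eq_bigr (fun s1 => (\sum_s2 ((((s1 != t) && (s2 != t) && (s1 != s2)) : nat)) + \sum_s2 ((s1 == s2) * \sum_x (a x s1 : nat)))%N)); last first.
    by move=> s1 _; rewrite big_split.
  rewrite big_split /= leq_add //.
    apply: eq_leq.
    rewrite (@eq_bigr _ _ _ _ _ _ _ (fun s1 => ((s1 != t) : nat) * q.-2)%N).
      rewrite -big_distrl /= -cardS_sum.
      have -> : [set s | s != t] = [set~ t] by apply/setP => s; rewrite !inE.
      by rewrite cardsC1.
    move=> s1 _; have [->|s1t] := eqVneq s1 t.
      by rewrite big1 // => s2 _; rewrite eqxx.
    rewrite mul1n -cardS_sum.
    transitivity #|[set~ t] :\ s1|.
      by apply: eq_card => s2; rewrite !inE /= [s1 == s2]eq_sym andbC.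
    have := cardsD1 s1 [set~ t]; rewrite cardsC1 in_setC1 s1t add1n => H.
    by rewrite -/q in H; rewrite H.
  apply: eq_leq.
  rewrite [RHS](eq_bigr (fun s1 => \sum_x (a x s1 : nat))%N); last first.
    move=> s1 _; rewrite (bigD1 s1) //= eqxx mul1n.
    rewrite [X in (_ + X)%N = _]big1 ?addn0 // => s2.
    by rewrite eq_sym => /negbTE ->.
  by rewrite /N exchange_big.
rewrite Gdef.
move: P1 P2 P3; set g := (\sum_x _)%N; set A := (\sum_x N x)%N;
  set B := (\sum_x _)%N.
case: q q2 => [|[|k]] // _.
rewrite /=. nia.
Qed.

Theorem lemma4p5 (F : finFieldType) :
  exists S : {set F * F * F},
    (forall l : F * F * F, l \in S ->
       irreducible_poly (pL l.1.1 l.1.2 l.2) /\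
       ~ irreducible_poly (rL l.1.1 l.1.2 l.2)) /\
    ((#|F| * (#|F| - 1) ^ 2)%:R / 9%:R - (2 * (#|F| - 1))%:R / 3%:R
       <= (#|S|%:R : rat)).
Proof.
pose S := [set l : F * F * F | [forall s, Pv l s != 0] && [exists t, Pv l t == - t]].
exists S; split.
  move=> l; rewrite inE => /andP[/forallP H /existsP[t /eqP Ht]].
  by split; [apply: irr_pL | apply: (red_rL Ht)].
set q := #|F|.
have q2 : (1 < q)%N.
  have := subset_leq_card (subsetT [set (0:F); 1]).
  by rewrite cards2 eq_sym oner_neq0 cardsT.
pose St t := [set l : F * F * F | [forall s, Pv l s != 0] && (Pv l t == - t)].
have h1 : (\sum_t #|St t| <= 3 * #|S|)%N.
  rewrite (eq_bigr (fun t => \sum_l ((l \in St t) : nat))%N); last first.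
    by move=> t _; rewrite -cardS_sum; apply: eq_card => l; rewrite !inE.
  rewrite exchange_big /= /S cardS_sum big_distrr /=; apply: leq_sum => l _.
  have [Hf|Hf] := boolP [forall s, Pv l s != 0]; last first.
    by rewrite big1 // => t _; rewrite inE (negbTE Hf).
  have [He|He] := boolP [exists t, Pv l t == - t]; last first.
    rewrite big1 // => t _; rewrite inE Hf /=.
    by move/existsPn: He => /(_ t) /negbTE ->.
  rewrite muln1.
  apply: leq_trans (M_le3 l); rewrite cardS_sum; apply: eq_leq.
  by apply: eq_bigr => t _; rewrite inE Hf.
have h2 : (q.-1 * (q * q + 2) <= 3 * \sum_t #|St t|)%N.
  have : (\sum_(t : F) ((t != 0%R) : nat) * (q * q + 2) <= \sum_t 3 * #|St t|)%N.
    apply: leq_sum => t _; have [->|t0] := eqVneq t 0; first by [].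
    rewrite mul1n; apply: leq_trans (count_t t0) _; rewrite leq_mul2l /=.
    rewrite -(card_imset _ (@Lt_inj F t)); apply: subset_leq_card.
    apply/subsetP => l /imsetP[x]; rewrite inE => Hx ->.
    by rewrite inE Hx Pv_Lt_t eqxx.
  rewrite -big_distrl -big_distrr /= -cardS_sum.
  have -> : [set s : F | s != 0] = [set~ 0] by apply/setP => s; rewrite !inE.
  by rewrite cardsC1.
have Hn : (q * (q - 1) ^ 2 <= 9 * #|S| + 3 * (2 * (q - 1)))%N.
  have h3 : (q.-1 * (q * q + 2) <= 9 * #|S|)%N.
    by apply: leq_trans h2 _; rewrite (_ : 9 = 3 * 3)%N // -mulnA leq_mul2l.
  move: h3; clear h1 h2; case: q q2 => [|[|k]] // _; rewrite /=. nia.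
move: Hn; set A := (q * (q - 1) ^ 2)%N; set B := (2 * (q - 1))%N.
rewrite -(ler_nat rat) natrD !natrM => Hn.
have -> : (9%:R : rat) = 9 by [].
lra.
Qed.
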